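(* There exist absolute constants $C,c>0$ such that the following holds. Let $G=\mathrm{SL}(2,q)$ and let $v,w\in\mathbb F_q$. Suppose that either (i) $q$ is even, or (ii) $q$ is odd, $(v^2,w^2)\neq(-4,-4)$ and $(v,w)\neq(0,0)$. Let $D$ be the distribution of \[\mathrm{Tr}\left(\begin{pmatrix}0&1\\1&w\end{pmatrix}u\begin{pmatrix}v&1\\1&0\end{pmatrix}u^{-1}\right)\] for $u$ uniform in $G$. Then (1) $D$ takes each value $x\in\mathbb F_q$ with probability at most $C/q$, and (2) $D$ is within statistical distance $Cq^{-c}$ of the uniform distribution on $\mathbb F_q$.
   Context: $\mathrm{Tr}$ denotes matrix trace; the two fixed matrices are arbitrary $2\times2$ matrices over $\mathbb F_q$ (not necessarily of determinant $1$) and matrix multiplication is the usual one. $\mathrm{SL}(2,q)$ is the group of $2\times2$ determinant-one matrices over $\mathbb F_q$. *)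

(* Defs.v *)
From HB Require Import structures.
From mathcomp Require Import all_boot all_order all_algebra all_fingroup all_field.
From Stdlib Require Import Reals.
Set Implicit Arguments. Unset Strict Implicit. Unset Printing Implicit Defensive.
Import GRing.Theory.

Local Open Scope ring_scope.

Definition mx2 (F : fieldType) (a b c d : F) : 'M[F]_2 :=
  \matrix_(i < 2, j < 2)
    if (i == 0 :> nat) then (if (j == 0 :> nat) then a else b)
    else (if (j == 0 :> nat) then c else d).

Definition SL2 (F : finFieldType) : {set 'M[F]_2} := [set u | \det u == 1].

Definition trace_count (F : finFieldType) (v w x : F) : nat :=
  #|[set u in SL2 F |
      \tr (mx2 0 1 1 w *m u *m mx2 v 1 1 0 *m invmx u) == x]|.

Definition trD (F : finFieldType) (v w x : F) : R :=
  Rdiv (INR (trace_count v w x)) (INR #|SL2 F|).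

Definition dist_to_uniform (F : finFieldType) (v w : F) : R :=
  Rmult (Rdiv 1 2)
    (\big[Rplus/R0]_(x : F) Rabs (Rminus (trD v w x) (Rdiv 1 (INR #|F|)))).

(* Main.v *)
Require Import Defs.
From Stdlib Require Import Reals Lra.
Ltac sfield := field.
From HB Require Import structures.
From mathcomp Require Import all_boot all_order all_algebra all_fingroup all_field.
From mathcomp Require Import ring.
Import GRing.Theory.
Set Implicit Arguments. Unset Strict Implicit.
Local Open Scope ring_scope.

Local Open Scope ring_scope.

Section M2.
Variable F : fieldType.

Lemma mx2E (a b c d : F) i j : mx2 a b c d i j =
  if (i == 0 :> nat) then (if (j == 0 :> nat) then a else b)
    else (if (j == 0 :> nat) then c else d).
Proof. by rewrite mxE. Qed.

Lemma mx2_eta (M : 'M[F]_2) : M = mx2 (M 0 0) (M 0 1) (M 1 0) (M 1 1).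
Proof.
apply/matrixP=> i j; rewrite mxE.
case: i => [[|[|i]] Hi] //; case: j => [[|[|j]] Hj] //=;
by congr (M _ _); apply/val_inj.
Qed.

Lemma mx2_mul (a b c d a' b' c' d' : F) :
  mx2 a b c d *m mx2 a' b' c' d' =
  mx2 (a*a' + b*c') (a*b' + b*d') (c*a' + d*c') (c*b' + d*d').
Proof.
apply/matrixP=> i j; rewrite !mxE !big_ord_recl big_ord0 !mxE /=.
by case: i => [[|[|i]] Hi] //; case: j => [[|[|j]] Hj] //=; rewrite addr0.
Qed.

Lemma mx2_tr (a b c d : F) : \tr (mx2 a b c d) = a + d.
Proof. by rewrite /mxtrace !big_ord_recl big_ord0 !mxE /= addr0. Qed.

Lemma mx2_det (a b c d : F) : \det (mx2 a b c d) = a * d - b * c.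
Proof.
rewrite (expand_det_row _ 0) !big_ord_recl big_ord0 addr0 /cofactor !det_mx11 !mxE /=.
rewrite !expr0 expr1 !mul1r /=. ring.
Qed.

End M2.

Local Open Scope ring_scope.

Section Conic.
Variable F : finFieldType.

Lemma root2 {B C y p : F} : y ^+ 2 + B * y + C = 0 -> p ^+ 2 + B * p + C = 0 ->
  y != p -> y = - B - p.
Proof.
move=> hy hp hyp.
have : (y - p) * (y + p + B) = 0.
  have -> : (y - p) * (y + p + B) = (y ^+ 2 + B * y + C) - (p ^+ 2 + B * p + C) by ring.
  by rewrite hy hp subrr.
move/eqP; rewrite mulf_eq0 subr_eq0 (negbTE hyp) /= => /eqP h.
have -> : y = (y + p + B) - B - p by ring.
by rewrite h sub0r.
Qed.

Variables (a c b d e : F).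
Definition fc (X Y : F) := Y ^+ 2 + (a * X + c) * Y + (b * X ^+ 2 + d * X + e).
Definition Zc := [set z : F * F | fc z.1 z.2 == 0].

Lemma Zc_le2q : (#|Zc| <= 2 * #|F|)%N.
Proof.
pose r (X : F) := odflt 0 [pick y | fc X y == 0].
pose g (z : F * F) := (z.1, z.2 == r z.1).
have inj : {in Zc &, injective g}.
  move=> [x y] [x' y']; rewrite !inE /= => hz hz' [ex ey]; subst x'.
  have hr : fc x (r x) = 0.
    rewrite /r; case: pickP => [z /eqP //|/(_ y)]; by rewrite hz.
  have key : forall z, fc x z = 0 -> z != r x -> z = - (a * x + c) - r x.
    move=> z hz0 hne; move: hz0 hr; rewrite /fc => h1 h2; exact: root2 h1 h2 hne.
  case: (eqVneq y (r x)) => [e1|hne]; case: (eqVneq y' (r x)) => [e1'|hne'].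
  - by rewrite e1 e1'.
  - by move: ey; rewrite e1 eqxx (negbTE hne').
  - by move: ey; rewrite e1' eqxx (negbTE hne).
  - by rewrite (key _ (eqP hz) hne) (key _ (eqP hz') hne').
rewrite -(card_in_imset inj).
apply: leq_trans (max_card _) _.
by rewrite card_prod card_bool mulnC.
Qed.

Lemma fc_shift (p1 p2 t k : F) : fc (p1 + t) (p2 + k * t) =
  fc p1 p2 + t * ((a * p2 + 2%:R * b * p1 + d) + k * (2%:R * p2 + a * p1 + c))
    + t ^+ 2 * (k ^+ 2 + a * k + b).
Proof. rewrite /fc; ring. Qed.

Hypothesis noline : forall k e', k ^+ 2 + a * k + b = 0 -> exists t, fc t (k * t + e') != 0.

Lemma Zc_le : (#|Zc| <= #|F| + 2)%N.
Proof.
case: (set_0Vmem Zc) => [->|[[p1 p2] hP]]; first by rewrite cards0.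
rewrite (cardsD1 (p1, p2)) hP add1n.
pose g (z : F * F) : option F :=
  if z.1 == p1 then None else Some ((z.2 - p2) / (z.1 - p1)).
have inj : {in Zc :\ (p1, p2) &, injective g}.
  move: hP; rewrite inE /= => /eqP hP.
  move=> [x y] [x' y']; rewrite !inE /= => /andP [hne /eqP hz] /andP [hne' /eqP hz'].
  rewrite /g /=.
  case: (eqVneq x p1) => [ex|nx]; case: (eqVneq x' p1) => [ex'|nx'] //; last first.
  - move=> [hk].
    set k := (y - p2) / (x - p1).
    have ey : y = p2 + k * (x - p1).
      by rewrite /k mulrVK ?unitfE ?subr_eq0 // addrC subrK.
    have ey' : y' = p2 + k * (x' - p1).
      by rewrite /k hk mulrVK ?unitfE ?subr_eq0 // addrC subrK.
    have ex : x = p1 + (x - p1) by rewrite addrC subrK.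
    have ex' : x' = p1 + (x' - p1) by rewrite addrC subrK.
    set L := (a * p2 + 2%:R * b * p1 + d) + k * (2%:R * p2 + a * p1 + c).
    set K := k ^+ 2 + a * k + b.
    have sol : forall t, t != 0 -> fc (p1 + t) (p2 + k * t) = 0 -> L + t * K = 0.
      move=> t tn0; rewrite fc_shift hP add0r.
      have -> : t * L + t ^+ 2 * K = t * (L + t * K) by ring.
      by move/eqP; rewrite mulf_eq0 (negbTE tn0) /= => /eqP.
    have s1 := sol (x - p1) ltac:(by rewrite subr_eq0) ltac:(by rewrite -ex -ey).
    have s2 := sol (x' - p1) ltac:(by rewrite subr_eq0) ltac:(by rewrite -ex' -ey').
    case: (eqVneq K 0) => [K0|Kn0].
      move: s1; rewrite K0 mulr0 addr0 => L0.
      have [t0 ht0] := @noline k (p2 - k * p1) K0.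
      move: ht0; have -> : t0 = p1 + (t0 - p1) by rewrite addrC subrK.
      have -> : k * (p1 + (t0 - p1)) + (p2 - k * p1) = p2 + k * (t0 - p1) by ring.
      by rewrite fc_shift -/L -/K hP L0 K0 !mulr0 !addr0 eqxx.
    have : (x - p1) * K = (x' - p1) * K.
      by rewrite mulrC [_ * K]mulrC; apply: (addrI L); rewrite !(mulrC K) s1 s2.
    move/(mulIf Kn0) => ht.
    have exx : x = x' by rewrite ex ex' ht.
    by rewrite ey ey' exx.
  - move=> _; subst x x'.
    have hy : y != p2 by apply: contraNneq hne => ->.
    have hy' : y' != p2 by apply: contraNneq hne' => ->.
    rewrite /fc in hz hz' hP.
    by rewrite (root2 hz hP hy) (root2 hz' hP hy').
rewrite -(card_in_imset inj) addn2 ltnS.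
apply: leq_trans (max_card _) _.
by rewrite card_option.
Qed.

End Conic.

Local Open Scope ring_scope.

Section Lines.
Variable F : finFieldType.

Lemma all_or_ex (P : F -> bool) : (exists t, P t) \/ (forall t, ~~ P t).
Proof.
case: (boolP [exists t, P t]) => [/existsP h|]; first by left.
by rewrite negb_exists => /forallP h; right.
Qed.

Lemma trace_noline (s w v : F) :
  s ^+ 2 + w * v * s - (v ^+ 2 + w ^+ 2 + 4%:R) != 0 ->
  forall k e', k ^+ 2 + (- w) * k + (- 1) = 0 ->
  exists t, fc (- w) (- s) (- 1) v 1 t (k * t + e') != 0.
Proof.
move=> hs k e hK.
case: (all_or_ex (fun t => fc (- w) (- s) (- 1) v 1 t (k * t + e) != 0)) => // H.
move: (H 0) (H 1); rewrite !negbK => /eqP h0 /eqP h1.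
move: hs; set h0' := fc _ _ _ _ _ 0 _ in h0; set h1' := fc _ _ _ _ _ 1 _ in h1.
set K := k ^+ 2 + - w * k + -1 in hK.
have -> : s ^+ 2 + w * v * s - (v ^+ 2 + w ^+ 2 + 4%:R) =
  - (2%:R * k - w) ^+ 2 * h0' + K * (4%:R - s ^+ 2)
  + (h1' - K - h0') * (w * s - 2%:R * v + (h1' - K - h0')).
  rewrite /h0' /h1' /K /fc; ring.
by rewrite h0 h1 hK !(mulr0, subr0, addr0, mul0r, sub0r, oppr0) eqxx.
Qed.

Lemma cent_noline (v : F) : v ^+ 2 + 4%:R != 0 ->
  forall k e', k ^+ 2 + v * k + (- 1) = 0 ->
  exists t, fc v 0 (- 1) 0 (- 1) t (k * t + e') != 0.
Proof.
move=> hs k e hK.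
case: (all_or_ex (fun t => fc v 0 (- 1) 0 (- 1) t (k * t + e) != 0)) => // H.
move: (H 0) (H 1); rewrite !negbK => /eqP h0 /eqP h1.
move: hs; set h0' := fc _ _ _ _ _ 0 _ in h0; set h1' := fc _ _ _ _ _ 1 _ in h1.
set K := k ^+ 2 + v * k + -1 in hK.
have -> : v ^+ 2 + 4%:R = (h1' - K - h0') ^+ 2 - (2%:R * k + v) ^+ 2 * h0' - 4%:R * K.
  rewrite /h0' /h1' /K /fc; ring.
by rewrite h0 h1 hK !(mulr0, subr0, addr0, mul0r, sub0r, oppr0, expr0n) eqxx.
Qed.

End Lines.

Local Open Scope ring_scope.

Section Fib.
Variable F : finFieldType.

Definition Cent (Q : 'M[F]_2) := [set g in SL2 F | g *m Q == Q *m g].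

Lemma SL2_unit (u : 'M[F]_2) : u \in SL2 F -> u \in unitmx.
Proof. by rewrite inE unitmxE => /eqP ->; rewrite unitr1. Qed.

Lemma fiber_bound (Q M : 'M[F]_2) (S : {set 'M[F]_2}) : S \subset SL2 F ->
  (#|[set u | (u \in S) && (u *m Q *m invmx u == M)]| <= #|Cent Q|)%N.
Proof.
move=> sS.
case: (set_0Vmem [set u | (u \in S) && (u *m Q *m invmx u == M)]) => [->|[u0]].
  by rewrite cards0.
rewrite inE => /andP [u0S /eqP eM].
have u0U := SL2_unit (subsetP sS _ u0S).
rewrite -(card_imset _ (can_inj (mulKVmx u0U : cancel (@mulmx _ 2 2 2 (invmx u0)) _))) .
apply: subset_leq_card; apply/subsetP => g /imsetP [u]; rewrite inE => /andP [uS /eqP eu] ->.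
have uU := SL2_unit (subsetP sS _ uS).
have := subsetP sS _ uS; have := subsetP sS _ u0S; rewrite !inE => /eqP d0 /eqP d1.
rewrite det_mulmx det_inv d0 d1 invr1 mulr1 eqxx /=.
apply/eqP.
have e1 : u *m Q = u0 *m Q *m invmx u0 *m u.
  by rewrite eM -eu mulmxKV.
by rewrite -mulmxA e1 !mulmxA mulVmx // mul1mx.
Qed.

Lemma fib (Q : 'M[F]_2) (S T : {set 'M[F]_2}) : S \subset SL2 F ->
  (forall u, u \in S -> u *m Q *m invmx u \in T) ->
  (#|S| <= #|T| * #|Cent Q|)%N.
Proof.
move=> sS hT.
rewrite -sum1_card (partition_big_imset (fun u => u *m Q *m invmx u)) /=.
apply: (@leq_trans (\sum_(M in [set u *m Q *m invmx u | u in S]) #|Cent Q|)).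
  apply: leq_sum => M _; rewrite sum1dep_card; exact: fiber_bound.
rewrite sum_nat_const leq_mul2r; apply/orP; right.
apply: subset_leq_card; apply/subsetP => M /imsetP [u uS ->]; exact: hT.
Qed.

End Fib.

Local Open Scope ring_scope.

Section Conc.
Variable F : finFieldType.
Implicit Types (v w x : F).

Definition T1 v w x := [set M : 'M[F]_2 | (\tr M == v) && (\det M == -1)
   && (\tr (mx2 0 1 1 w *m M) == x)].
Definition T2 v w x := [set M : 'M[F]_2 | (\tr M == w) && (\det M == -1)
   && (\tr (mx2 v 1 1 0 *m M) == x)].

Definition Z1 v w x := Zc (-w) (-(x - w * v)) (-1) v 1.
Definition Z2 v w x := Zc (- (- v)) (- x) (-1) w 1.
Definition ZC (t : F) := Zc t 0 (-1) 0 (-1).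

Lemma T1_bound v w x : (#|T1 v w x| <= #|Z1 v w x|)%N.
Proof.
have inj : {in T1 v w x &, injective (fun M : 'M[F]_2 => (M 0 0, M 1 0))}.
  move=> M M'; rewrite !inE (mx2_eta M) (mx2_eta M') !mx2_mul !mx2_tr !mx2_det.
  rewrite -!(mx2_eta M) -!(mx2_eta M').
  move=> /andP [/andP [/eqP t1 _] /eqP x1] /andP [/andP [/eqP t2 _] /eqP x2] [e0 e1].
  have e3 : M 1 1 = M' 1 1.
    by apply: (addrI (M 0 0)); rewrite t1 e0 t2.
  have e2 : M 0 1 = M' 0 1.
    have h : M 0 1 = x - M 1 0 - w * M 1 1 by rewrite -x1; ring.
    have h' : M' 0 1 = x - M' 1 0 - w * M' 1 1 by rewrite -x2; ring.
    by rewrite h h' e1 e3.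
  by rewrite (mx2_eta M) (mx2_eta M') e0 e1 e2 e3.
rewrite -(card_in_imset inj); apply: subset_leq_card; apply/subsetP => z /imsetP [M];
rewrite /Z1 /Z2.
rewrite !inE (mx2_eta M) !mx2_mul !mx2_tr !mx2_det -!(mx2_eta M).
move=> /andP [/andP [/eqP t1 /eqP d1] /eqP x1] -> /=.
rewrite -t1 -x1; apply/eqP.
transitivity (M 0 0 * M 1 1 - M 0 1 * M 1 0 + 1); first by rewrite /fc; ring.
by rewrite d1 addNr.
Qed.

Lemma T2_bound v w x : (#|T2 v w x| <= #|Z2 v w x|)%N.
Proof.
have inj : {in T2 v w x &, injective (fun M : 'M[F]_2 => (M 0 0, M 1 0))}.
  move=> M M'; rewrite !inE (mx2_eta M) (mx2_eta M') !mx2_mul !mx2_tr !mx2_det.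
  rewrite -!(mx2_eta M) -!(mx2_eta M').
  move=> /andP [/andP [/eqP t1 _] /eqP x1] /andP [/andP [/eqP t2 _] /eqP x2] [e0 e1].
  have e3 : M 1 1 = M' 1 1.
    by apply: (addrI (M 0 0)); rewrite t1 e0 t2.
  have e2 : M 0 1 = M' 0 1.
    have h : M 0 1 = x - M 1 0 - v * M 0 0 by rewrite -x1; ring.
    have h' : M' 0 1 = x - M' 1 0 - v * M' 0 0 by rewrite -x2; ring.
    by rewrite h h' e1 e0.
  by rewrite (mx2_eta M) (mx2_eta M') e0 e1 e2 e3.
rewrite -(card_in_imset inj); apply: subset_leq_card; apply/subsetP => z /imsetP [M];
rewrite /Z1 /Z2.
rewrite !inE (mx2_eta M) !mx2_mul !mx2_tr !mx2_det -!(mx2_eta M).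
move=> /andP [/andP [/eqP t1 /eqP d1] /eqP x1] -> /=.
rewrite -t1 -x1; apply/eqP.
transitivity (M 0 0 * M 1 1 - M 0 1 * M 1 0 + 1); first by rewrite /fc; ring.
by rewrite d1 addNr.
Qed.

Lemma Cent1_bound v : (#|Cent (mx2 v 1 1 0)| <= #|ZC v|)%N.
Proof.
have hC : forall g, g \in Cent (mx2 v 1 1 0) ->
   [/\ g 1 0 = g 0 1, g 0 0 = v * g 0 1 + g 1 1 & g 0 0 * g 1 1 - g 0 1 * g 1 0 = 1].
  move=> g; rewrite !inE (mx2_eta g) !mx2_mul !mx2_det -!(mx2_eta g).
  move=> /andP [/eqP d /eqP /matrixP E].
  have E00 := E 0 0; have E01 := E 0 1; have E10 := E 1 0.
  rewrite !mx2E /= in E00 E01 E10.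
  split => //.
  - have -> : g 1 0 = g 0 1 + ((v * g 0 0 + 1 * g 1 0) - (g 0 0 * v + g 0 1 * 1)) by ring.
    by rewrite E00 subrr addr0.
  - transitivity (g 0 0 * 1 + g 0 1 * 0); first by ring.
    by rewrite E01; ring.
have inj : {in Cent (mx2 v 1 1 0) &, injective (fun g : 'M[F]_2 => (g 0 1, g 1 1))}.
  move=> g g' /hC [a1 a2 _] /hC [b1 b2 _] [e0 e1].
  by rewrite (mx2_eta g) (mx2_eta g') a1 a2 b1 b2 e0 e1.
rewrite -(card_in_imset inj); apply: subset_leq_card; apply/subsetP => z /imsetP [g];
rewrite /ZC.
move=> /hC [a1 a2 a3] -> /=; rewrite inE /=; apply/eqP.
move: a3; rewrite a1 a2 => h.
transitivity ((v * g 0 1 + g 1 1) * g 1 1 - g 0 1 * g 0 1 - 1); first by rewrite /fc; ring.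
by rewrite h subrr.
Qed.

Lemma Cent2_bound w : (#|Cent (mx2 0 1 1 w)| <= #|ZC w|)%N.
Proof.
have hC : forall g, g \in Cent (mx2 0 1 1 w) ->
   [/\ g 1 0 = g 0 1, g 1 1 = g 0 0 + w * g 0 1 & g 0 0 * g 1 1 - g 0 1 * g 1 0 = 1].
  move=> g; rewrite !inE (mx2_eta g) !mx2_mul !mx2_det -!(mx2_eta g).
  move=> /andP [/eqP d /eqP /matrixP E].
  have E00 := E 0 0; have E01 := E 0 1; have E10 := E 1 0.
  rewrite !mx2E /= in E00 E01 E10.
  split => //.
  - have -> : g 1 0 = g 0 1 + ((0 * g 0 0 + 1 * g 1 0) - (g 0 0 * 0 + g 0 1 * 1)) by ring.
    by rewrite -E00 subrr addr0.
  - transitivity (0 * g 0 1 + 1 * g 1 1); first by ring.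
    by rewrite -E01; ring.
have inj : {in Cent (mx2 0 1 1 w) &, injective (fun g : 'M[F]_2 => (g 0 1, g 0 0))}.
  move=> g g' /hC [a1 a2 _] /hC [b1 b2 _] [e0 e1].
  by rewrite (mx2_eta g) (mx2_eta g') a1 a2 b1 b2 e0 e1.
rewrite -(card_in_imset inj); apply: subset_leq_card; apply/subsetP => z /imsetP [g];
rewrite /ZC.
move=> /hC [a1 a2 a3] -> /=; rewrite inE /=; apply/eqP.
move: a3; rewrite a1 a2 => h.
transitivity (g 0 0 * (g 0 0 + w * g 0 1) - g 0 1 * g 0 1 - 1); first by rewrite /fc; ring.
by rewrite h subrr.
Qed.

End Conc.

Local Open Scope ring_scope.

Section Count.
Variable F : finFieldType.
Implicit Types (v w x : F).

Definition S1 v w x := [set u in SL2 F |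
      \tr (mx2 0 1 1 w *m u *m mx2 v 1 1 0 *m invmx u) == x].

Lemma SL2_det (u : 'M[F]_2) : u \in SL2 F -> \det u = 1.
Proof. by rewrite inE => /eqP. Qed.

Lemma count_case1 v w x : (trace_count v w x <= #|Z1 v w x| * #|ZC v|)%N.
Proof.
rewrite /trace_count -/(S1 v w x).
apply: leq_trans (leq_mul (T1_bound v w x) (Cent1_bound v)).
apply: fib; first by apply/subsetP => u; rewrite inE => /andP [].
move=> u; rewrite inE => /andP [uS /eqP ex].
have uU := SL2_unit uS.
rewrite inE; apply/andP; split; first (apply/andP; split).
- by rewrite mxtrace_mulC mulmxA mulVmx // mul1mx mx2_tr addr0.
- rewrite !det_mulmx det_inv SL2_det // invr1 mulr1 mul1r mx2_det; apply/eqP; ring.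
- by rewrite !mulmxA ex.
Qed.

Lemma count_case2 v w x : (trace_count v w x <= #|Z2 v w x| * #|ZC w|)%N.
Proof.
rewrite /trace_count -/(S1 v w x).
have inj : injective (@invmx F 2) := can_inj invmxK.
rewrite -(card_imset _ inj).
apply: leq_trans (leq_mul (T2_bound v w x) (Cent2_bound w)).
apply: fib.
  apply/subsetP => u' /imsetP [u]; rewrite inE => /andP [uS _] ->.
  by rewrite inE det_inv SL2_det // invr1.
move=> u' /imsetP [u]; rewrite inE => /andP [uS /eqP ex] ->.
have uU := SL2_unit uS.
rewrite invmxK inE; apply/andP; split; first (apply/andP; split).
- by rewrite mxtrace_mulC mulmxA mulmxV // mul1mx mx2_tr add0r.
- rewrite !det_mulmx det_inv SL2_det // invr1 mulr1 mul1r mx2_det; apply/eqP; ring.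
- rewrite -ex !mulmxA -[_ *m invmx u *m _ *m u]mulmxA mxtrace_mulC !mulmxA //.
Qed.

Lemma count_sum v w : (\sum_(x : F) trace_count v w x)%N = #|SL2 F|.
Proof.
apply/esym; rewrite -sum1_card.
rewrite (partition_big (fun u => \tr (mx2 0 1 1 w *m u *m mx2 v 1 1 0 *m invmx u)) xpredT) //.
by apply: eq_bigr => x _; rewrite sum1dep_card.
Qed.

Lemma SL2_card_ge : (#|F| ^ 2 * (#|F|.-1) <= #|SL2 F|)%N.
Proof.
pose D := setX (setX [set~ (0 : F)] [set: F]) [set: F].
have cD : #|D| = (#|F| ^ 2 * (#|F|.-1))%N.
  by rewrite !cardsX cardsC1 !cardsT -mulnA mulnn mulnC.
pose f (z : F * F * F) := mx2 z.1.1 z.1.2 z.2 ((1 + z.1.2 * z.2) / z.1.1).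
have inj : {in D &, injective f}.
  move=> [[a b] c] [[a' b'] c'] _ _ /matrixP E.
  have := E 0 0; have := E 0 1; have := E 1 0; rewrite !mxE /= => -> -> ->; done.
rewrite -cD -(card_in_imset inj); apply: subset_leq_card; apply/subsetP => M /imsetP.
move=> [[[a b] c]]; rewrite !inE /= => /andP [an0 _] ->.
rewrite andbT in an0; rewrite /f /= mx2_det mulrC divfK //; apply/eqP; ring.
Qed.

Lemma even_char2 : ~~ odd #|F| -> (2%:R : F) = 0.
Proof.
move=> ev.
have h := expf_card (-1 : F).
move: h; rewrite -signr_odd (negbTE ev) expr0 => h.
have -> : (2%:R : F) = 1 - (-1) by rewrite opprK -mulr2n.
by rewrite -h subrr.
Qed.

Lemma ZC_bound (t : F) : (t ^+ 2 + 4%:R != 0) \/ ((2%:R : F) = 0 /\ t = 0) ->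
  (#|ZC t| <= #|F| + 2)%N.
Proof.
case=> [h|[h2 ->]].
  by apply: Zc_le; apply: cent_noline.
have inj : {in ZC 0 &, injective (fun z : F * F => z.1)}.
  have key : forall z : F * F, z \in ZC (0 : F) -> z.2 = z.1 + 1.
    move=> [X Y]; rewrite /ZC /Zc inE /= => /eqP hz.
    have : (Y - X - 1) ^+ 2 = 0.
      transitivity (fc 0 0 (-1) 0 (-1) X Y + 2%:R * (X ^+ 2 + 1 - X * Y - Y + X)).
        by rewrite /fc; ring.
      by rewrite hz h2 mul0r addr0.
    move/eqP; rewrite expf_eq0 /= subr_eq0 subr_eq => /eqP ->; ring.
  by move=> [X Y] [X' Y'] /key /= hY /key /= hY' /= eX; rewrite hY hY' eX.
rewrite -(card_in_imset inj); apply: leq_trans (max_card _) _; exact: leq_addr.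
Qed.

Lemma quad_roots (p r : F) : exists b1 b2 : F, forall s, s ^+ 2 + p * s + r = 0 -> s = b1 \/ s = b2.
Proof.
case: (all_or_ex (fun s : F => s ^+ 2 + p * s + r == 0)) => [[b1 /eqP h1]|H].
  exists b1, (- p - b1) => s hs.
  case: (eqVneq s b1) => [->|ne]; first by left.
  by right; apply: root2 hs h1 ne.
by exists 0, 0 => s /eqP hs; move: (H s); rewrite hs.
Qed.

End Count.

Local Open Scope ring_scope.

Section Main.
Variable F : finFieldType.

Definition goodt (t : F) := (t ^+ 2 + 4%:R != 0) \/ ((2%:R : F) = 0 /\ t = 0).

Lemma case_sel (v w : F) :
  (~~ odd #|F| \/
     (odd #|F| /\ ~ (v ^+ 2 = - (4%:R) /\ w ^+ 2 = - (4%:R)) /\ ~ (v = 0 /\ w = 0))) ->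
  goodt v \/ goodt w.
Proof.
case=> [ev|[_ [h _]]].
  have h2 := even_char2 ev.
  left; case: (eqVneq v 0) => [->|vn0]; [right; done| left].
  have -> : (4%:R : F) = 2%:R * 2%:R by rewrite -natrM.
  by rewrite h2 mulr0 addr0 expf_eq0 /=.
case: (eqVneq (v ^+ 2 + 4%:R) 0) => [hv|hv]; last by left; left.
right; left; apply/eqP => hw; apply: h; split; apply/eqP; rewrite -addr_eq0 ?hv //.
by apply/eqP.
Qed.

Lemma count_bounds (v w : F) : goodt v \/ goodt w ->
  exists b1 b2 : F, forall x,
    (trace_count v w x <= #|F|.*2 * (#|F| + 2))%N /\
    (x != b1 -> x != b2 -> (trace_count v w x <= (#|F| + 2) * (#|F| + 2))%N).
Proof.
case=> [gv|gw].
  have [b1 [b2 hb]] := quad_roots (w * v) (- (v ^+ 2 + w ^+ 2 + 4%:R)).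
  exists (b1 + w * v), (b2 + w * v) => x; split.
    apply: leq_trans (count_case1 v w x) _.
    by apply: leq_mul; [rewrite -mul2n; exact: Zc_le2q | exact: ZC_bound].
  move=> n1 n2; apply: leq_trans (count_case1 v w x) _.
  apply: leq_mul; last exact: ZC_bound.
  apply: Zc_le; apply: trace_noline; apply/eqP => /hb [] /eqP.
    by rewrite subr_eq => /eqP ex; move: n1; rewrite ex eqxx.
  by rewrite subr_eq => /eqP ex; move: n2; rewrite ex eqxx.
have [b1 [b2 hb]] := quad_roots (- v * w) (- (w ^+ 2 + (- v) ^+ 2 + 4%:R)).
exists b1, b2 => x; split.
  apply: leq_trans (count_case2 v w x) _.
  by apply: leq_mul; [rewrite -mul2n; exact: Zc_le2q | exact: ZC_bound].
move=> n1 n2; apply: leq_trans (count_case2 v w x) _.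
apply: leq_mul; last exact: ZC_bound.
apply: Zc_le; apply: trace_noline; apply/eqP => /hb [] ex.
  by move: n1; rewrite ex eqxx.
by move: n2; rewrite ex eqxx.
Qed.

End Main.

Local Open Scope ring_scope.

HB.instance Definition _ := Monoid.isComLaw.Build R R0 Rplus
  (fun a b c => esym (Rplus_assoc a b c)) Rplus_comm Rplus_0_l.

Section RS.
Variable F : finFieldType.
Open Scope R_scope.

Lemma Rsum_le (f g : F -> R) : (forall x, f x <= g x) ->
  \big[Rplus/R0]_(x : F) f x <= \big[Rplus/R0]_(x : F) g x.
Proof.
move=> h; apply: (big_ind2 (fun a b => a <= b)); [lra| |by []].
by move=> *; apply: Rplus_le_compat.
Qed.

Lemma Rsum_sub (f g : F -> R) :
  \big[Rplus/R0]_(x : F) (f x - g x) = \big[Rplus/R0]_(x : F) f x - \big[Rplus/R0]_(x : F) g x.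
Proof.
apply: (big_ind3 (fun a b c => a = b - c)); [lra| |by []].
by move=> ? ? ? ? ? ? -> ->; lra.
Qed.

Lemma Rsum_add (f g : F -> R) :
  \big[Rplus/R0]_(x : F) (f x + g x) = \big[Rplus/R0]_(x : F) f x + \big[Rplus/R0]_(x : F) g x.
Proof.
apply: (big_ind3 (fun a b c => a = b + c)); [lra| |by []].
by move=> ? ? ? ? ? ? -> ->; lra.
Qed.

Lemma Rsum_scal (c : R) (f : F -> R) :
  \big[Rplus/R0]_(x : F) (c * f x) = c * \big[Rplus/R0]_(x : F) f x.
Proof.
apply: (big_ind2 (fun a b => a = c * b)); [lra| |by []].
by move=> ? ? ? ? -> ->; lra.
Qed.

Lemma Rsum_INR (f : F -> nat) :
  \big[Rplus/R0]_(x : F) INR (f x) = INR (\sum_(x : F) f x)%N.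
Proof.
apply/esym; apply: (big_ind2 (fun a b => INR a = b)); [by []| |by []].
by move=> ? ? ? ? <- <-; rewrite -plus_INR.
Qed.

Lemma Rsum_const (c : R) : \big[Rplus/R0]_(x : F) c = INR #|F| * c.
Proof.
have -> : \big[Rplus/R0]_(x : F) c = \big[Rplus/R0]_(x : F) (c * INR 1).
  by apply: eq_bigr => x _; simpl; lra.
by rewrite Rsum_scal Rsum_INR sum1_card Rmult_comm.
Qed.

Lemma Rsum_ind (b : F) (c : R) : \big[Rplus/R0]_(x : F) (if x == b then c else R0) = c.
Proof. rewrite (bigD1 b) //= eqxx big1 ?Rplus_0_r // => x /negbTE ->. by []. Qed.

Lemma div_le (a b c d : R) : 0 < b -> 0 < d -> a * d <= c * b -> a / b <= c / d.
Proof.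
move=> hb hd h.
have -> : a / b = (a * d) * / (b * d) by sfield; lra.
have -> : c / d = (c * b) * / (b * d) by sfield; lra.
apply: Rmult_le_compat_r => //.
apply/Rlt_le/Rinv_0_lt_compat/Rmult_lt_0_compat => //.
Qed.

Lemma INR_le {m n : nat} : leq m n -> INR m <= INR n.
Proof. by move/leP; apply: le_INR. Qed.

Lemma INR_mul (m n : nat) : INR (muln m n) = INR m * INR n.
Proof. exact: mult_INR. Qed.

Lemma INR_add (m n : nat) : INR (addn m n) = INR m + INR n.
Proof. exact: plus_INR. Qed.

End RS.


Theorem mainTheorem20 :
  exists (C c : R), Rlt R0 C /\ Rlt R0 c /\
  forall (F : finFieldType) (v w : F),
    (~~ odd #|F| \/
     (odd #|F| /\ ~ (v ^+ 2 = - (4%:R) /\ w ^+ 2 = - (4%:R)) /\ ~ (v = 0 /\ w = 0))) ->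
    (forall x : F, Rle (trD v w x) (Rdiv C (INR #|F|))) /\
    Rle (dist_to_uniform v w) (Rmult C (Rpower (INR #|F|) (Ropp c))).
Proof.
Open Scope R_scope.
exists 30, 1; split; first lra; split; first lra.
move=> F v w hyp.
have [b1 [b2 hb]] := count_bounds (case_sel hyp).
have q2 : leq 2 #|F| := finNzRing_gt1 F.
have hG := SL2_card_ge F.
have hsum := count_sum v w.
set q := #|F| in q2 hG hb hsum *.
set G := #|SL2 F| in hG hsum *.
set Q := INR q.
have Q2 : 2 <= Q by have h := INR_le q2; rewrite -/Q in h; change (INR 2) with (1+1) in h; lra.
have GQ : Q * Q * (Q - 1) <= INR G.
  apply: Rle_trans (INR_le hG).
  rewrite INR_mul -mulnn INR_mul.
  have -> : INR q.-1 = Q - 1 by rewrite /Q -{2}(prednK (ltnW q2)) S_INR; lra.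
  by rewrite -/Q; apply: Rle_refl.
have Qp : 0 < Q by lra.
have Gp : 0 < INR G.
  apply: Rlt_le_trans GQ; apply: Rmult_lt_0_compat; [nra|lra].
have hc1 : forall x, INR (trace_count v w x) <= 2 * Q * (Q + 2).
  move=> x; have [h _] := hb x; apply: Rle_trans (INR_le h) _.
  rewrite INR_mul -mul2n INR_mul INR_add /=; rewrite -/Q; lra.
have hc2 : forall x, x != b1 -> x != b2 -> INR (trace_count v w x) <= (Q + 2) * (Q + 2).
  move=> x n1 n2; have [_ h] := hb x; apply: Rle_trans (INR_le (h n1 n2)) _.
  rewrite INR_mul INR_add /=; rewrite -/Q; lra.
have D0 : forall x, 0 <= trD v w x.
  move=> x; rewrite /trD -/G; apply: Rmult_le_pos; [exact: pos_INR|].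
  by apply/Rlt_le/Rinv_0_lt_compat.
have D8 : forall x, trD v w x <= 8 / Q.
  move=> x; rewrite /trD -/G; apply: div_le => //.
  have h1 : INR (trace_count v w x) * Q <= 2 * Q * (Q + 2) * Q.
    by apply: Rmult_le_compat_r; [lra|apply: hc1].
  have h2 : 2 * Q * (Q + 2) * Q <= 8 * (Q * Q * (Q - 1)) by nra.
  lra.
have Dg : forall x, x != b1 -> x != b2 -> trD v w x <= (Q + 14) / (Q * Q).
  move=> x n1 n2; rewrite /trD -/G; apply: div_le => //; first nra.
  have h1 : INR (trace_count v w x) * (Q * Q) <= (Q + 2) * (Q + 2) * (Q * Q).
    by apply: Rmult_le_compat_r; [nra|apply: hc2].
  have h2 : (Q + 2) * (Q + 2) * (Q * Q) <= (Q + 14) * (Q * Q * (Q - 1)) by nra.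
  have h3 : (Q + 14) * (Q * Q * (Q - 1)) <= (Q + 14) * INR G.
    by apply: Rmult_le_compat_l; [lra|].
  lra.
split.
  move=> x; apply: Rle_trans (D8 x) _; apply: div_le => //; lra.
rewrite Rpower_Ropp Rpower_1 //.
set y := fun x => trD v w x - 1 / Q.
set m := fun x => Rmax (y x) 0.
have sumD : \big[Rplus/R0]_(x : F) trD v w x = 1.
  rewrite /trD -/G.
  have -> : \big[Rplus/R0]_(x : F) (INR (trace_count v w x) / INR G) =
     (/ INR G) * \big[Rplus/R0]_(x : F) INR (trace_count v w x).
    by rewrite -Rsum_scal; apply: eq_bigr => x _; rewrite /Rdiv Rmult_comm.
  rewrite Rsum_INR hsum; sfield; lra.
have sumy : \big[Rplus/R0]_(x : F) y x = 0.
  rewrite /y Rsum_sub sumD Rsum_const -/Q; sfield; lra.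
have habs : \big[Rplus/R0]_(x : F) Rabs (trD v w x - 1 / INR #|F|) =
   2 * \big[Rplus/R0]_(x : F) m x - \big[Rplus/R0]_(x : F) y x.
  rewrite -Rsum_scal -Rsum_sub; apply: eq_bigr => x _.
  rewrite /m /y /Rmax -/q -/Q; case: Rle_dec => h; rewrite /Rabs; case: Rcase_abs => h'; lra.
set e := 14 / (Q * Q).
have hm : forall x, m x <= e + (if x == b1 then 8 / Q else R0) + (if x == b2 then 8 / Q else R0).
  move=> x.
  have e0 : 0 <= e by rewrite /e; apply: Rmult_le_pos; [lra|apply/Rlt_le/Rinv_0_lt_compat; nra].
  have i0 : forall b : F, 0 <= (if x == b then 8 / Q else R0).
    by move=> b; case: (x == b); [apply: Rmult_le_pos; [lra|apply/Rlt_le/Rinv_0_lt_compat]|lra].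
  have my : m x <= Rmax (trD v w x) 0.
    rewrite /m /y; apply: Rle_max_compat_r.
    have : 0 <= 1 / Q by apply: Rmult_le_pos; [lra|apply/Rlt_le/Rinv_0_lt_compat].
    lra.
  have mD : Rmax (trD v w x) 0 = trD v w x by apply: Rmax_left; apply: D0.
  have mle : m x <= trD v w x by rewrite -mD.
  have D8x := D8 x.
  have p8 : 0 <= 8 / Q by apply: Rmult_le_pos; [lra|apply/Rlt_le/Rinv_0_lt_compat].
  case E1: (x == b1); case E2: (x == b2); try lra.
  have := Dg x (negbT E1) (negbT E2).
  have ee : (Q + 14) / (Q * Q) - 1 / Q = e by rewrite /e; sfield; lra.
  rewrite /m /y; move=> hD; apply: Rmax_lub; lra.
have summ : \big[Rplus/R0]_(x : F) m x <= Q * e + 8 / Q + 8 / Q.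
  apply: Rle_trans (Rsum_le hm) _.
  rewrite !Rsum_add Rsum_const !Rsum_ind -/Q; lra.
rewrite /dist_to_uniform habs sumy.
have Qe : Q * e = 14 / Q by rewrite /e; sfield; lra.
rewrite Qe in summ.
have -> : 30 * / Q = 30 / Q by [].
have : 14 / Q + 8 / Q + 8 / Q = 30 / Q by sfield; lra.
lra.
Qed.
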